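(* For all integers $n,k,j\ge 0$, \[ \sum_{i=0}^n e_{n,i}^k \binom{n+j-i}{n} = (j+k+1)^n . \]
   Context: For a fixed integer parameter $k$, the numbers $e^k_{n,i}$ are defined by $e^k_{0,0}=1$, $e^k_{n,i}=0$ whenever $i<0$ or $i>n$, and $e^k_{n,i}=(k+i+1)\,e^k_{n-1,i}+(n-k-i)\,e^k_{n-1,i-1}$ for all other integers $n,i$. Binomial coefficients $\binom{a}{n}$ with $0\le a<n$ are $0$. *)

(* Defs.v *)
From mathcomp Require Import all_boot all_order all_algebra.
Set Implicit Arguments. Unset Strict Implicit. Unset Printing Implicit Defensive.
Import Order.TTheory GRing.Theory Num.Theory.
Local Open Scope ring_scope.

(* e k n i = e^k_{n,i} (integer valued), for a parameter k : nat and indices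
   n, i : nat.  e^k_{0,0} = 1, e^k_{n,i} = 0 for i > n (negative i never
   arises since i : nat; the term e_{n-1,i-1} with i = 0 is taken as 0), and
   e^k_{n,i} = (k+i+1) e^k_{n-1,i} + (n-k-i) e^k_{n-1,i-1} otherwise. *)
Fixpoint e (k : nat) (n i : nat) {struct n} : int :=
  match n with
  | 0%N => if i == 0%N then 1 else 0
  | n'.+1 =>
      if (n'.+1 < i)%N then 0 else
      (k + i + 1)%:Z * e k n' i
      + ((n'.+1)%:Z - k%:Z - i%:Z) * (match i with 0%N => 0 | i'.+1 => e k n' i' end)
  end.

(* Main.v *)
Require Import Defs.
From mathcomp Require Import all_boot all_order all_algebra.
From mathcomp Require Import zify ring.
Import Order.TTheory GRing.Theory Num.Theory.
Local Open Scope ring_scope.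

Lemma e_big k n i : (n < i)%N -> e k n i = 0.
Proof.
case: n => [|n] /= H; first by case: i H.
by rewrite H.
Qed.

Lemma key n k j i : (i <= n)%N ->
  (k+i+1)%:Z * ('C(n.+1+j-i, n.+1))%:Z
  + ((n.+1)%:Z - k%:Z - (i.+1)%:Z) * ('C(n.+1+j-i.+1, n.+1))%:Z
  = (j+k+1)%:Z * ('C(n+j-i,n))%:Z.
Proof.
move=> Hin.
case: (leqP i j) => Hij.
- have [d ->] : exists d, j = (i + d)%N by exists (j - i)%N; lia.
  have -> : (n.+1 + (i + d) - i = (n + d).+1)%N by lia.
  have -> : (n.+1 + (i + d) - i.+1 = (n + d))%N by lia.
  have -> : (n + (i + d) - i = (n + d))%N by lia.
  rewrite binS.
  have H := mul_bin_left (n + d) n.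
  have E : (n + d - n = d)%N by lia.
  rewrite E in H.
  move: H; set C := 'C(n + d, n); set D := 'C(n + d, n.+1) => H.
  have HZ : (n.+1)%:Z * D%:Z = d%:Z * C%:Z by rewrite -!PoszM H.
  rewrite PoszD.
  apply/eqP; rewrite -subr_eq0; apply/eqP.
  transitivity ((n.+1)%:Z * D%:Z - d%:Z * C%:Z); last by rewrite HZ subrr.
  rewrite !PoszD /=. ring.
- rewrite !bin_small; [by rewrite !mulr0 addr0| lia..].
Qed.

Theorem corollary2p4 (n k j : nat) :
  \sum_(0 <= i < n.+1) e k n i * ('C(n + j - i, n))%:Z = ((j + k + 1) ^ n)%N%:Z.
Proof.
elim: n => [|n IH].
  by rewrite big_nat1 /= add0n subn0 bin0.
rewrite (@eq_big_nat _ _ _ 0 n.+2 _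
   (fun i => (k + i + 1)%:Z * e k n i * ('C(n.+1 + j - i, n.+1))%:Z
     + ((n.+1)%:Z - k%:Z - i%:Z) * (match i with 0%N => 0 | i'.+1 => e k n i' end)
        * ('C(n.+1 + j - i, n.+1))%:Z)); last first.
  move=> i /andP[_ Hi] /=.
  have -> : (n.+1 < i)%N = false by lia.
  by rewrite mulrDl.
rewrite big_split /= big_nat_recr //= e_big // mulr0 mul0r addr0.
rewrite [X in _ + X = _]big_nat_recl //= mulr0 mul0r add0r -big_split /=.
rewrite expnS PoszM -IH mulr_sumr.
apply: eq_big_nat => i /andP[_ Hi].
rewrite mulrCA -(@key n k j i); last by lia.
ring.
Qed.
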